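(* For every real $t>0$, $\varphi(1/t)=t^3\varphi(t)$. Moreover $\varphi(t)\to1$ as $t\to0^+$; more precisely, for $0<t\le 1/2$, $\varphi(t)=\frac{1}{135135\,t^{21}}\sum_{\varepsilon_1,\dots,\varepsilon_6\in\{\pm1\}}\varepsilon_1\cdots\varepsilon_6(1+\varepsilon_1t+\dots+\varepsilon_6t^6)^{13/2}$ and $\varphi(t)=1-\tfrac{1}{24}t^2+O(t^4)$.
   Context: For $t>0$ define \[\varphi(t)=\frac{1}{135135\;t^{21}}\sum_{\varepsilon_0,\dots,\varepsilon_6\in\{\pm1\}}\varepsilon_0\varepsilon_1\cdots\varepsilon_6\max\{\varepsilon_0+\varepsilon_1t+\dots+\varepsilon_6t^6,0\}^{13/2},\] where $135135=3\cdot5\cdot7\cdot9\cdot11\cdot13$. *)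

(* Defs.v *)
From Stdlib Require Import Reals Lra List.
Import ListNotations.
Open Scope R_scope.

Fixpoint sign_vecs (n : nat) : list (list R) :=
  match n with
  | O => [[]]
  | S m => flat_map (fun v => [1 :: v; -1 :: v]) (sign_vecs m)
  end.

Definition prodR (e : list R) : R := fold_right Rmult 1 e.

Fixpoint sgn_poly (e : list R) (t : R) (k : nat) : R :=
  match e with
  | [] => 0
  | a :: e' => a * t ^ k + sgn_poly e' t (S k)
  end.

Definition sum_over (l : list (list R)) (f : list R -> R) : R :=
  fold_right (fun v acc => f v + acc) 0 l.

(* max{x,0}^(13/2), the non-negative real 13/2-power of the positive part. *)
Definition pos_pow13_2 (x : R) : R := sqrt (Rmax x 0) ^ 13.

Definition phi (t : R) : R :=
  / (135135 * t ^ 21) *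
  sum_over (sign_vecs 7) (fun e => prodR e * pos_pow13_2 (sgn_poly e t 0)).

(* Main.v *)
Require Import Defs.
From Stdlib Require Import Reals Lra List ZArith Lia.
Import ListNotations.
Open Scope R_scope.

Definition pm (x : R) : Prop := x = 1 \/ x = -1.

Lemma sv_in n e : In e (sign_vecs n) -> length e = n /\ Forall pm e.
Proof.
  revert e; induction n as [|n IH]; intros e He; simpl in He.
  - destruct He as [He|[]]; subst; simpl; split; auto.
  - apply in_flat_map in He. destruct He as [v [Hv He]].
    destruct (IH v Hv) as [Hl Hf].
    simpl in He; destruct He as [He|[He|[]]]; subst; simpl; split; auto;
      constructor; auto; unfold pm; auto.
Qed.

Lemma sum_flat l f : sum_over (flat_map (fun v => [1::v; -1::v]) l) f
  = sum_over l (fun v => f (1::v) + f (-1::v)).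
Proof. induction l as [|a l IH]; simpl; [reflexivity|]. unfold sum_over in *; simpl. rewrite IH. ring. Qed.

Lemma sum_ext l f g : (forall e, In e l -> f e = g e) -> sum_over l f = sum_over l g.
Proof. induction l as [|a l IH]; intros H; simpl; [reflexivity|].
  rewrite H by (left; reflexivity). rewrite IH; [reflexivity|]. intros; apply H; right; auto. Qed.

Lemma sum_plus l f g : sum_over l (fun e => f e + g e) = sum_over l f + sum_over l g.
Proof. induction l as [|a l IH]; simpl; [ring|]. unfold sum_over in *; simpl; rewrite IH; ring. Qed.

Lemma sum_scal l c f : sum_over l (fun e => c * f e) = c * sum_over l f.
Proof. induction l as [|a l IH]; simpl; [ring|]. unfold sum_over in *; simpl; rewrite IH; ring. Qed.

Lemma sum_bound l f B : (forall e, In e l -> Rabs (f e) <= B) ->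
  Rabs (sum_over l f) <= INR (length l) * B.
Proof. induction l as [|a l IH]; intros H; simpl.
  - rewrite Rabs_R0; lra.
  - unfold sum_over in *; simpl.
    eapply Rle_trans; [apply Rabs_triang|].
    assert (H1 := H a (or_introl eq_refl)).
    assert (H2 := IH (fun e He => H e (or_intror He))).
    destruct (length l); simpl in *; lra.
Qed.

Lemma pm_abs a : pm a -> Rabs a = 1.
Proof. intros [H|H]; subst; [apply Rabs_R1|rewrite Rabs_left; lra]. Qed.

Lemma prod_abs e : Forall pm e -> Rabs (prodR e) = 1.
Proof. induction 1 as [|a e Ha He IH]; unfold prodR in *; simpl.
  - apply Rabs_R1.
  - rewrite Rabs_mult, IH, pm_abs by auto. ring. Qed.

Lemma sgn_bound e t k : Forall pm e -> 0 <= t ->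
  Rabs (sgn_poly e t k) <= sgn_poly (map (fun _ => 1) e) t k.
Proof. intros H; revert k; induction H as [|a e Ha He IH]; intros k Ht; simpl.
  - rewrite Rabs_R0; lra.
  - eapply Rle_trans; [apply Rabs_triang|].
    specialize (IH (S k) Ht).
    assert (Rabs (a * t ^ k) = 1 * t ^ k).
    { rewrite Rabs_mult. rewrite (Rabs_pos_eq (t^k)) by (apply pow_le; lra).
      rewrite pm_abs by auto; ring. }
    lra.
Qed.

Lemma geo6 t : 0 <= t <= 1/2 ->
  1 * t ^ 1 + (1 * t ^ 2 + (1 * t ^ 3 + (1 * t ^ 4 + (1 * t ^ 5 + (1 * t ^ 6 + 0))))) <= 63/32 * t.
Proof. intros Ht.
  assert (H : forall k, t ^ S k <= t * (1/2)^k).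
  { intros k; simpl. apply Rmult_le_compat_l; [lra|]. apply pow_incr; lra. }
  pose proof (H 0%nat); pose proof (H 1%nat); pose proof (H 2%nat);
  pose proof (H 3%nat); pose proof (H 4%nat); pose proof (H 5%nat).
  simpl in *. lra.
Qed.

Lemma x_bound e t : In e (sign_vecs 6) -> 0 <= t <= 1/2 -> Rabs (sgn_poly e t 1) <= 63/32 * t.
Proof. intros He Ht. destruct (sv_in _ _ He) as [Hl Hf].
  eapply Rle_trans; [apply sgn_bound; auto; lra|].
  destruct e as [|a0 [|a1 [|a2 [|a3 [|a4 [|a5 [|a6 e]]]]]]]; simpl in Hl; try lia.
  simpl map. apply geo6; auto.
Qed.

Lemma pp_neg y : y <= 0 -> pos_pow13_2 y = 0.
Proof. intros; unfold pos_pow13_2. rewrite Rmax_right by lra. rewrite sqrt_0. ring. Qed.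

Lemma pp_pos y : 0 <= y -> pos_pow13_2 y = sqrt y ^ 13.
Proof. intros; unfold pos_pow13_2. rewrite Rmax_left by lra. reflexivity. Qed.

Lemma pp_scale c y : 0 < c -> pos_pow13_2 (c * y) = sqrt c ^ 13 * pos_pow13_2 y.
Proof. intros Hc. destruct (Rle_dec y 0).
  - rewrite (pp_neg y), (pp_neg (c*y)) by nra. ring.
  - rewrite (pp_pos y), (pp_pos (c*y)) by nra. rewrite sqrt_mult_alt by lra. apply Rpow_mult_distr.
Qed.

Fixpoint pz (l : list Z) (x : R) : R :=
  match l with [] => 0 | a :: l' => IZR a + x * pz l' x end.

Lemma pz_bound l B x : (0 <= B)%Z -> forallb (fun z => Z.abs z <=? B)%Z l = true ->
  Rabs x <= 1/2 -> Rabs (pz l x) <= 2 * IZR B.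
Proof. intros HB; induction l as [|a l IH]; intros Hl Hx; simpl in *.
  - rewrite Rabs_R0. apply IZR_le in HB. lra.
  - apply Bool.andb_true_iff in Hl; destruct Hl as [Ha Hl].
    apply Z.leb_le in Ha. apply IZR_le in Ha. rewrite abs_IZR in Ha.
    specialize (IH Hl Hx).
    eapply Rle_trans; [apply Rabs_triang|]. rewrite Rabs_mult.
    assert (Rabs x * Rabs (pz l x) <= 1/2 * (2 * IZR B)).
    { apply Rmult_le_compat; auto using Rabs_pos. }
    lra.
Qed.
Definition Dz : Z := 70368744177664%Z.
Definition Az : list Z := [(70368744177664)%Z; (35184372088832)%Z; (-8796093022208)%Z; (4398046511104)%Z; (-2748779069440)%Z; (1924145348608)%Z; (-1443109011456)%Z; (1133871366144)%Z; (-921270484992)%Z; (767725404160)%Z; (-652566593536)%Z; (563580239872)%Z; (-493132709888)%Z; (436232781824)%Z; (-389493555200)%Z; (350544199680)%Z; (-317680680960)%Z; (289650032640)%Z; (-265512529920)%Z; (244551014400)%Z; (-226209688320)%Z; (210051853440)%Z; (-195730136160)%Z; (182965127280)%Z; (-171529806825)%Z].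
Definition Uz : list Z := [(22692233739187592871542784)%Z; (-10036949538486819923951616)%Z; (6667055852859602606489600)%Z; (-4924529891316751925248000)%Z; (3820755950159548907520000)%Z; (-3048963248227320028200960)%Z; (2476959107430853367562240)%Z; (-2036487956630277508300800)%Z; (1687998038918144458752000)%Z; (-1406665032431787048960000)%Z; (1175971967112973972930560)%Z; (-984431078530178969763840)%Z; (823770289206646643097600)%Z; (-687864866999477207040000)%Z; (572075426350714060800000)%Z; (-472820339878865171251200)%Z; (387289831242241187020800)%Z; (-313249128210636254208000)%Z; (248899501097598574080000)%Z; (-192778022680257268800000)%Z; (143683886237685084345600)%Z; (-100623342691298094782400)%Z; (62767945876099875372000)%Z; (-29422474629421816580625)%Z].
Definition Qz : list Z := [(-11292270290282741760)%Z; (0)%Z; (-16121201664416808960)%Z; (0)%Z; (-22247908345349406720)%Z; (0)%Z; (-34932849408737280000)%Z; (0)%Z; (-60129405836904628224)%Z; (0)%Z; (-102835799559461928960)%Z; (0)%Z; (-209723309756399222784)%Z; (0)%Z; (-459939013461884436480)%Z; (0)%Z; (-10948019742776816713728)%Z; (0)%Z; (-724945123466979627663360)%Z; (0)%Z; (-15090934149249798037266432)%Z; (0)%Z; (-173415300599091654576046080)%Z; (0)%Z; (-1441692612531759721345744896)%Z; (0)%Z; (-9244223787084882555957903360)%Z; (0)%Z; (-47640912625881698977021648896)%Z; (0)%Z; (-206049271528722583744068648960)%Z; (0)%Z; (-784695624473044288280094474240)%Z; (0)%Z; (-2662345061337720790001948590080)%Z; (0)%Z; (-8148410530052706662934250930176)%Z;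 (0)%Z; (-22818527898196753638717925294080)%Z; (0)%Z; (-58988022565766025666966445080576)%Z; (0)%Z; (-142381161797847573423480858869760)%Z; (0)%Z; (-322172090595453197821905401167872)%Z; (0)%Z; (-686007664176853227232104055603200)%Z; (0)%Z; (-1377664869346655938567572257538048)%Z; (0)%Z; (-2625669220584183784662334244290560)%Z; (0)%Z; (-4756682880411539920887734790856704)%Z; (0)%Z; (-8211199339714586501147938134589440)%Z; (0)%Z; (-13516539360186924795067555913662464)%Z; (0)%Z; (-21252830331936717309222712919162880)%Z; (0)%Z; (-31975081258606497937576949657149440)%Z; (0)%Z; (-46045179438699971233708304282910720)%Z; (0)%Z; (-63520279696973560262317159051100160)%Z; (0)%Z; (-83970154656472452181882912590888960)%Z; (0)%Z; (-106499003641864981438878742609059840)%Z; (0)%Z; (-129591804714526970374546086344294400)%Z; (0)%Z; (-151343465610572738498581097955655680)%Z; (0)%Z; (-169591969372882337286640267341496320)%Z; (0)%Z; (-182482265091410214215086944498769920)%Z; (0)%Z; (-188464050522730557002490619565998080)%Z; (0)%Z; (-186886501085036415109573276763258880)%Z; (0)%Z; (-177683677886368126358058418378997760)%Z; (0)%Z; (-162136632279303679025518095833210880)%Z; (0)%Z; (-141873637084681691379823292483665920)%Z; (0)%Z; (-118997421176687279201086291197788160)%Z; (0)%Z; (-95575660937063498049402994634096640)%Z; (0)%Z; (-73482924304278937032997398946652160)%Z; (0)%Z; (-54080149317711695358850813921689600)%Z; (0)%Z; (-38030254623878321651845543603568640)%Z; (0)%Z; (-25539616220113502463151475277004800)%Z;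 (0)%Z; (-16353821850243206413141303459799040)%Z; (0)%Z; (-9995672241649732377256426450944000)%Z; (0)%Z; (-5806794182070385182460326572851200)%Z; (0)%Z; (-3206452788026079481099515226521600)%Z; (0)%Z; (-1679413782369859117071668952883200)%Z; (0)%Z; (-832956693052202067727388934144000)%Z; (0)%Z; (-389721477604351452065588842905600)%Z; (0)%Z; (-170784406405725052991871614976000)%Z; (0)%Z; (-70021653978327301640585019801600)%Z; (0)%Z; (-26739304937856470112763244544000)%Z; (0)%Z; (-9442303930745918607326515200000)%Z; (0)%Z; (-3031485871139784008555544576000)%Z; (0)%Z; (-878120787795499714694731776000)%Z; (0)%Z; (-224718455459840003519090688000)%Z; (0)%Z; (-50149188313444640548896768000)%Z; (0)%Z; (-9508575870412654689239040000)%Z; (0)%Z; (-1389225450267522803819520000)%Z; (0)%Z; (-152436861242416138752000000)%Z; (0)%Z; (-11849525469976978667520000)%Z; (0)%Z; (-450552299238668390400000)%Z; (0)%Z; (-4505522992386683904000)%Z; (0)%Z; (0)%Z; (0)%Z; (0)%Z; (0)%Z; (0)%Z; (0)%Z; (0)%Z; (0)%Z; (0)%Z; (0)%Z; (0)%Z; (0)%Z; (0)%Z; (0)%Z; (0)%Z; (0)%Z; (0)%Z; (0)%Z; (0)%Z; (0)%Z].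
Definition A1z : list Z := [(35184372088832)%Z; (-8796093022208)%Z; (4398046511104)%Z; (-2748779069440)%Z; (1924145348608)%Z; (-1443109011456)%Z; (1133871366144)%Z; (-921270484992)%Z; (767725404160)%Z; (-652566593536)%Z; (563580239872)%Z; (-493132709888)%Z; (436232781824)%Z; (-389493555200)%Z; (350544199680)%Z; (-317680680960)%Z; (289650032640)%Z; (-265512529920)%Z; (244551014400)%Z; (-226209688320)%Z; (210051853440)%Z; (-195730136160)%Z; (182965127280)%Z; (-171529806825)%Z].
Definition maxA1 : Z := 35184372088832%Z.
Definition maxU : Z := 22692233739187592871542784%Z.
Definition maxQ : Z := 188464050522730557002490619565998080%Z.

Lemma U_id x : IZR Dz * IZR Dz * (1 + x) - pz Az x * pz Az x = x^25 * pz Uz x.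
Proof. unfold Az, Uz, Dz. cbn [pz]. ring. Qed.

Lemma Dz_pos : 0 < IZR Dz.
Proof. apply IZR_lt. reflexivity. Qed.

Lemma A_pos x : Rabs x <= 1/4 -> 3/4 * IZR Dz <= pz Az x.
Proof. intros Hx.
  change Az with (Dz :: A1z). cbn [pz].
  assert (H := pz_bound A1z maxA1 x ltac:(discriminate) eq_refl ltac:(lra)).
  assert (Rabs (x * pz A1z x) <= 1/4 * (2 * IZR maxA1)).
  { rewrite Rabs_mult. apply Rmult_le_compat; auto using Rabs_pos. }
  assert (IZR maxA1 * 2 = IZR Dz) by (unfold maxA1, Dz; lra).
  pose proof (Rle_abs (- (x * pz A1z x))). rewrite Rabs_Ropp in *. lra.
Qed.

Definition Pf (x : R) : R := (1 + x) ^ 6 * (pz Az x / IZR Dz).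
Definition Mc : R := 11 * IZR maxU / (IZR Dz * IZR Dz).

Lemma rem_bound x : Rabs x <= 1/4 ->
  Rabs (pos_pow13_2 (1 + x) - Pf x) <= Mc * Rabs x ^ 25.
Proof. intros Hx.
  assert (Hx' : -1/4 <= x <= 1/4) by (split; [pose proof (Rle_abs (-x)); rewrite Rabs_Ropp in *|pose proof (Rle_abs x)]; lra).
  rewrite pp_pos by lra.
  set (s := sqrt (1 + x)).
  assert (Hs : s * s = 1 + x) by (apply sqrt_sqrt; lra).
  assert (Hs0 : 0 <= s) by apply sqrt_pos.
  set (a := pz Az x / IZR Dz).
  pose proof Dz_pos as HD.
  assert (Ha : 3/4 <= a).
  { unfold a. apply Rmult_le_reg_r with (IZR Dz); auto. replace (pz Az x / IZR Dz * IZR Dz) with (pz Az x) by (field; lra).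
    pose proof (A_pos x Hx); lra. }
  assert (E1 : (s - a) * (s + a) = x ^ 25 * pz Uz x / (IZR Dz * IZR Dz)).
  { rewrite <- U_id. unfold a. replace ((s - pz Az x / IZR Dz) * (s + pz Az x / IZR Dz))
      with (s * s - pz Az x * pz Az x / (IZR Dz * IZR Dz)) by (field; lra).
    rewrite Hs. field; lra. }
  assert (HU := pz_bound Uz maxU x ltac:(discriminate) eq_refl ltac:(lra)).
  assert (E2 : Rabs (s - a) * (s + a) <= Rabs x ^ 25 * (2 * IZR maxU) / (IZR Dz * IZR Dz)).
  { replace (Rabs (s - a) * (s + a)) with (Rabs ((s - a) * (s + a)))
      by (rewrite Rabs_mult, (Rabs_pos_eq (s + a)) by lra; reflexivity).
    rewrite E1. unfold Rdiv. rewrite Rabs_mult, Rabs_mult, RPow_abs.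
    rewrite (Rabs_pos_eq (/ _)) by (left; apply Rinv_0_lt_compat; nra).
    apply Rmult_le_compat_r; [left; apply Rinv_0_lt_compat; nra|].
    apply Rmult_le_compat_l; [apply Rabs_pos|auto]. }
  set (W := Rabs x ^ 25 * (2 * IZR maxU) / (IZR Dz * IZR Dz)) in *.
  assert (E3 : Rabs (s - a) <= 4/3 * W).
  { pose proof (Rabs_pos (s - a)). nra. }
  assert (E4 : 0 <= (1 + x) ^ 6 <= 4).
  { split; [apply pow_le; lra|].
    apply Rle_trans with ((5/4)^6); [apply pow_incr; lra| simpl; lra]. }
  replace (s ^ 13 - Pf x) with ((1 + x) ^ 6 * (s - a)).
  2:{ unfold Pf; fold a. replace (s ^ 13) with ((s * s) ^ 6 * s) by ring. rewrite Hs. ring. }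
  rewrite Rabs_mult, (Rabs_pos_eq ((1+x)^6)) by lra.
  apply Rle_trans with (4 * (4/3 * W)).
  { apply Rmult_le_compat; auto using Rabs_pos; lra. }
  unfold W, Mc.
  apply Rle_trans with (32/3 * (Rabs x ^ 25 * IZR maxU / (IZR Dz * IZR Dz))); [right; field; lra|].
  replace (11 * IZR maxU / (IZR Dz * IZR Dz) * Rabs x ^ 25) with (11 * (Rabs x ^ 25 * IZR maxU / (IZR Dz * IZR Dz))) by (field; lra).
  apply Rmult_le_compat_r; [|lra].
  unfold Rdiv; apply Rmult_le_pos; [apply Rmult_le_pos|left; apply Rinv_0_lt_compat; nra].
  - apply pow_le, Rabs_pos.
  - apply IZR_le; discriminate.
Qed.

Lemma phi_red t : 0 < t <= 1/2 ->
  phi t = / (135135 * t ^ 21) *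
    sum_over (sign_vecs 6) (fun e => prodR e * pos_pow13_2 (1 + sgn_poly e t 1)).
Proof. intros Ht. unfold phi. f_equal.
  replace (sign_vecs 7) with (flat_map (fun v => [1::v; -1::v]) (sign_vecs 6)) by reflexivity.
  rewrite sum_flat. apply sum_ext. intros e He.
  assert (Hx := x_bound e t He ltac:(lra)).
  pose proof (Rle_abs (sgn_poly e t 1)).
  cbn [prodR sgn_poly fold_right]. unfold prodR.
  rewrite (pp_neg (-1 * t ^ 0 + sgn_poly e t 1)) by (simpl; lra).
  simpl pow. replace (1 * 1 + sgn_poly e t 1) with (1 + sgn_poly e t 1) by ring. ring.
Qed.

Lemma rev7 e t : length e = 7%nat -> t <> 0 ->
  sgn_poly e (/ t) 0 = / t ^ 6 * sgn_poly (rev e) t 0 /\ prodR (rev e) = prodR e.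
Proof. intros Hl Ht.
  destruct e as [|a0 [|a1 [|a2 [|a3 [|a4 [|a5 [|a6 [|a7 e]]]]]]]]; simpl in Hl; try lia.
  cbn [sgn_poly rev app prodR fold_right]. split; [field; auto| ring].
Qed.

Lemma reidx (F : list R -> R) : sum_over (sign_vecs 7) (fun e => F (rev e)) = sum_over (sign_vecs 7) F.
Proof. cbn [sign_vecs flat_map app sum_over fold_right rev]. ring. Qed.

Lemma part1 t : 0 < t -> phi (/ t) = t ^ 3 * phi t.
Proof. intros Ht. unfold phi.
  set (F := fun e => prodR e * pos_pow13_2 (sgn_poly e t 0)).
  rewrite (sum_ext _ _ (fun e => / t ^ 39 * F (rev e))).
  2:{ intros e He. destruct (sv_in _ _ He) as [Hl _].
      destruct (rev7 e t Hl ltac:(lra)) as [E1 E2]. rewrite E1. unfold F. rewrite E2.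
      rewrite pp_scale by (apply Rinv_0_lt_compat, pow_lt; lra).
      replace (/ t ^ 6) with (/ t ^ 3 * / t ^ 3) by (field; lra).
      rewrite sqrt_square by (left; apply Rinv_0_lt_compat, pow_lt; lra).
      replace ((/ t ^ 3) ^ 13) with (/ t ^ 39) by (field; lra). ring. }
  rewrite sum_scal, reidx. fold F. field. lra.
Qed.

Lemma main_id t : sum_over (sign_vecs 6) (fun e => prodR e * ((1 + sgn_poly e t 1)^6 * pz Az (sgn_poly e t 1))) = IZR Dz * 135135 * t^21 - IZR Dz * 135135 / 24 * t^23 + t^25 * pz Qz t / 24.
Proof.
unfold Az, Qz, Dz.
cbn [sign_vecs flat_map app sum_over fold_right prodR sgn_poly pz].
field.
Qed.

Lemma part3 t : 0 < t <= 1 / 2 ->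
     phi t = / (135135 * t ^ 21) *
       sum_over (sign_vecs 6)
         (fun e => prodR e * Rpower (1 + sgn_poly e t 1) (13 / 2)).
Proof. intros Ht. rewrite phi_red by lra. f_equal. apply sum_ext. intros e He. f_equal.
  assert (Hx := x_bound e t He ltac:(lra)).
  pose proof (Rle_abs (- sgn_poly e t 1)). rewrite Rabs_Ropp in *.
  assert (Hy : 0 < 1 + sgn_poly e t 1) by lra.
  rewrite pp_pos by lra.
  rewrite <- Rpower_sqrt by lra. rewrite <- Rpower_pow by (apply exp_pos).
  rewrite Rpower_mult. f_equal. simpl INR. lra.
Qed.

Lemma len64 : length (sign_vecs 6) = 64%nat.
Proof. reflexivity. Qed.

Lemma Mc_nonneg : 0 <= Mc.
Proof. unfold Mc. pose proof Dz_pos. unfold Rdiv. apply Rmult_le_pos.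
  - apply Rmult_le_pos; [lra| apply IZR_le; discriminate].
  - left; apply Rinv_0_lt_compat; nra. Qed.

Lemma part4 : exists C delta : R, 0 < delta /\
     forall t : R, 0 < t < delta ->
       Rabs (phi t - (1 - t ^ 2 / 24)) <= C * t ^ 4.
Proof.
  pose proof Dz_pos as HD.
  set (K1 := 2 * IZR maxQ / (24 * IZR Dz * 135135)).
  set (K2 := 64 * Mc * (63/32)^25 / 135135).
  exists (K1 + K2), (1/8). split; [lra|]. intros t Ht.
  rewrite phi_red by lra.
  rewrite (sum_ext _ _ (fun e => prodR e * Pf (sgn_poly e t 1) +
                               prodR e * (pos_pow13_2 (1 + sgn_poly e t 1) - Pf (sgn_poly e t 1))))
    by (intros; ring).
  rewrite sum_plus.
  rewrite (sum_ext _ _ (fun e => / IZR Dz * (prodR e * ((1 + sgn_poly e t 1)^6 * pz Az (sgn_poly e t 1)))))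
    by (intros; unfold Pf; field; lra).
  rewrite sum_scal, main_id.
  set (E := sum_over _ (fun e => prodR e * (pos_pow13_2 (1 + sgn_poly e t 1) - Pf (sgn_poly e t 1)))).
  assert (HE : Rabs E <= INR 64 * (Mc * (63/32 * t) ^ 25)).
  { rewrite <- len64. apply sum_bound. intros e He.
    destruct (sv_in _ _ He) as [_ Hf].
    assert (Hx := x_bound e t He ltac:(lra)).
    rewrite Rabs_mult, prod_abs by auto. rewrite Rmult_1_l.
    eapply Rle_trans; [apply rem_bound; lra|].
    apply Rmult_le_compat_l; [apply Mc_nonneg|]. apply pow_incr. split; [apply Rabs_pos|lra]. }
  set (Q := pz Qz t).
  assert (HQ : Rabs Q <= 2 * IZR maxQ) by (apply pz_bound; [discriminate|reflexivity|rewrite Rabs_pos_eq; lra]).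
  assert (Ht21 : 0 < t ^ 21) by (apply pow_lt; lra).
  assert (Ht4 : 0 < t ^ 4) by (apply pow_lt; lra).
  replace (/ (135135 * t ^ 21) * (/ IZR Dz * (IZR Dz * 135135 * t ^ 21 - IZR Dz * 135135 / 24 * t ^ 23 + t ^ 25 * Q / 24) + E) - (1 - t ^ 2 / 24))
    with (t ^ 4 * (Q / (24 * IZR Dz * 135135)) + E / (135135 * t ^ 21)) by (field; lra).
  eapply Rle_trans; [apply Rabs_triang|].
  rewrite Rmult_plus_distr_r.
  apply Rplus_le_compat.
  - rewrite Rabs_mult, (Rabs_pos_eq (t^4)) by lra. rewrite Rmult_comm.
    apply Rmult_le_compat_r; [lra|]. unfold K1, Rdiv. rewrite Rabs_mult.
    rewrite (Rabs_pos_eq (/ _)) by (left; apply Rinv_0_lt_compat; lra).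
    apply Rmult_le_compat_r; [left; apply Rinv_0_lt_compat; lra| auto].
  - unfold Rdiv. rewrite Rabs_mult.
    rewrite (Rabs_pos_eq (/ _)) by (left; apply Rinv_0_lt_compat; lra).
    apply Rle_trans with (INR 64 * (Mc * (63 / 32 * t) ^ 25) * / (135135 * t ^ 21)).
    { apply Rmult_le_compat_r; [left; apply Rinv_0_lt_compat; lra| auto]. }
    right. unfold K2. rewrite Rpow_mult_distr. simpl INR. field. lra.
Qed.

Lemma part2 : limit1_in phi (fun t => 0 < t) 1 0.
Proof.
  destruct part4 as [C [d [Hd H]]].
  unfold limit1_in, limit_in. intros eps Heps.
  set (C' := Rabs C + 1).
  assert (HC' : 0 < C') by (unfold C'; pose proof (Rabs_pos C); lra).
  exists (Rmin d (Rmin 1 (eps / C'))). split.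
  { apply Rmin_pos; [lra|apply Rmin_pos; [lra| apply Rdiv_lt_0_compat; lra]]. }
  intros x [Hx Hxa]. simpl in *. unfold R_dist in *.
  rewrite Rminus_0_r, Rabs_pos_eq in Hxa by lra.
  assert (H1 : x < d) by (eapply Rlt_le_trans; [apply Hxa|apply Rmin_l]).
  assert (H2 : x < 1) by (eapply Rlt_le_trans; [apply Hxa|eapply Rle_trans; [apply Rmin_r|apply Rmin_l]]).
  assert (H3 : x < eps / C') by (eapply Rlt_le_trans; [apply Hxa|eapply Rle_trans; [apply Rmin_r|apply Rmin_r]]).
  specialize (H x (conj Hx H1)).
  assert (Hx4 : x ^ 4 <= x).
  { replace (x ^ 4) with (x * (x * x * x)) by ring.
    assert (x * x * x <= 1).
    { assert (x*x <= 1) by nra. nra. }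
    nra. }
  assert (Hx2 : x ^ 2 <= x) by (simpl; nra).
  assert (HC : C * x ^ 4 <= Rabs C * x).
  { apply Rle_trans with (Rabs C * x ^ 4).
    - apply Rmult_le_compat_r; [apply pow_le; lra|apply Rle_abs].
    - apply Rmult_le_compat_l; [apply Rabs_pos|auto]. }
  replace (phi x - 1) with ((phi x - (1 - x ^ 2 / 24)) - x ^ 2 / 24) by ring.
  eapply Rle_lt_trans; [apply Rabs_triang|]. rewrite Rabs_Ropp.
  rewrite (Rabs_pos_eq (x^2/24)) by (pose proof (pow2_ge_0 x); lra).
  assert (x * C' < eps).
  { apply Rmult_lt_reg_r with (/ C'); [apply Rinv_0_lt_compat; lra|].
    replace (x * C' * / C') with x by (field; lra). exact H3. }
  change (x*(x*1)) with (x^2) in H. change (x*(x*(x*(x*1)))) with (x^4) in H.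
  unfold C' in *. assert (x * (Rabs C + 1) = Rabs C * x + x) by ring. lra.
Qed.

Theorem mainTheorem3 :
  (forall t : R, 0 < t -> phi (/ t) = t ^ 3 * phi t) /\
  limit1_in phi (fun t => 0 < t) 1 0 /\
  (forall t : R, 0 < t <= 1 / 2 ->
     phi t = / (135135 * t ^ 21) *
       sum_over (sign_vecs 6)
         (fun e => prodR e * Rpower (1 + sgn_poly e t 1) (13 / 2))) /\
  (exists C delta : R, 0 < delta /\
     forall t : R, 0 < t < delta ->
       Rabs (phi t - (1 - t ^ 2 / 24)) <= C * t ^ 4).
Proof.
  split; [exact part1|]. split; [exact part2|]. split; [exact part3|exact part4].
Qed.
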